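(* If $A\in S_n(\mathbb{F}_2)$ is an alternate matrix of rank $r>0$, then there exist linearly independent $\mathbf{x}_1,\ldots,\mathbf{x}_r\in\mathbb{F}_2^n$ with $A=\mathbf{x}_1\mathbf{x}_1^{\top}+\cdots+\mathbf{x}_r\mathbf{x}_r^{\top}+(\mathbf{x}_1+\cdots+\mathbf{x}_r)(\mathbf{x}_1+\cdots+\mathbf{x}_r)^{\top}$. Moreover, if $r$ is even and $A=\mathbf{y}_1\circ\mathbf{y}_2+\cdots+\mathbf{y}_{r-1}\circ\mathbf{y}_r$ for linearly independent $\mathbf{y}_1,\ldots,\mathbf{y}_r$, then the vectors $\mathbf{x}_1=\mathbf{y}_1$, $\mathbf{x}_2=\mathbf{y}_2$, and for $2\le k\le r/2$, $\mathbf{x}_{2k-1}=\mathbf{y}_1+\cdots+\mathbf{y}_{2k-2}+\mathbf{y}_{2k-1}$, $\mathbf{x}_{2k}=\mathbf{y}_1+\cdots+\mathbf{y}_{2k-2}+\mathbf{y}_{2k}$, have this property.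
   Context: $S_n(\mathbb{F}_2)$ is the set of symmetric $n\times n$ matrices over the binary field; such a matrix is alternate if its diagonal is zero. For $\mathbf{x},\mathbf{y}\in\mathbb{F}_2^n$, $\mathbf{x}\circ\mathbf{y}=\mathbf{x}\mathbf{y}^{\top}+\mathbf{y}\mathbf{x}^{\top}$. *)

(* Defs.v *)
From HB Require Import structures.
From mathcomp Require Import all_boot all_order all_algebra.
Set Implicit Arguments. Unset Strict Implicit. Unset Printing Implicit Defensive.
Import GRing.Theory.
Local Open Scope ring_scope.

Definition F2 := 'F_2.

Definition symmetric_mx n (A : 'M[F2]_n) : Prop := A^T = A.

Definition alternate_mx n (A : 'M[F2]_n) : Prop :=
  symmetric_mx A /\ forall i, A i i = 0.

Definition circ n (x y : 'cV[F2]_n) : 'M[F2]_n := x *m y^T + y *m x^T.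

(* x_1 x_1^T + ... + x_r x_r^T + (x_1+...+x_r)(x_1+...+x_r)^T,
   for the family x_0, ..., x_{r-1} (0-indexed) *)
Definition sum_sq_form n r (x : nat -> 'cV[F2]_n) : 'M[F2]_n :=
  \sum_(i < r) x i *m (x i)^T + (\sum_(i < r) x i) *m (\sum_(i < r) x i)^T.

Definition lin_indep n r (x : nat -> 'cV[F2]_n) : Prop := free (mkseq x r).

(* The explicit vectors of the second part (0-indexed):
   indices j = 0,1 (k = 1): x_j = y_j;
   indices j = 2k-2, 2k-1 (paper's 2k-1, 2k), k >= 2:
   x_j = y_0 + ... + y_{2k-3} + y_j, where 2k-2 = 2*(j/2). *)
Definition x_of_y n (y : nat -> 'cV[F2]_n) (j : nat) : 'cV[F2]_n :=
  if (j < 2)%N then y j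
  else \sum_(i < (j./2).*2) y i + y j.

(* Main.v *)
Require Import Defs.
From HB Require Import structures.
From mathcomp Require Import all_boot all_order all_algebra.
From mathcomp Require Import ring.
Import GRing.Theory.
Local Open Scope ring_scope.

Lemma F2_addxx (x : F2) : x + x = 0.
Proof. exact: (@addrr_pchar2 _ (@pchar_Fp 2 isT)). Qed.

Lemma F2_opp (x : F2) : - x = x.
Proof. exact: (@oppr_pchar2 _ (@pchar_Fp 2 isT)). Qed.

Lemma F2_neq0 (x : F2) : x != 0 -> x = 1.
Proof. by case: x => [[|[|k]] Hk] // _; apply/val_inj. Qed.

Lemma F2_two : (2%:R : F2) = 0.
Proof. by rewrite -[2%:R]/(1 + 1 : F2) F2_addxx. Qed.

Lemma mx_addxx {m n} (M : 'M[F2]_(m, n)) : M + M = 0.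
Proof. by apply/matrixP => i j; rewrite !mxE F2_addxx. Qed.

Lemma half_odd2 m : (m.*2.+1)./2 = m.
Proof. exact: (half_bit_double m true). Qed.

Lemma xyE n (y : nat -> 'cV[F2]_n) j :
  x_of_y y j = \sum_(i < (j./2).*2) y i + y j.
Proof.
rewrite /x_of_y; case: ifP => // j2.
by case: j j2 => [|[|]] //= _; rewrite big_ord0 add0r.
Qed.

Lemma sumx n (y : nat -> 'cV[F2]_n) m :
  \sum_(i < m.*2) x_of_y y i = \sum_(i < m.*2) y i.
Proof.
elim: m => [|m IH]; first by rewrite !big_ord0.
rewrite doubleS !big_ord_recr /= IH !xyE doubleK half_odd2.
set S := \sum_(i < m.*2) y i.
have SS : S + S = 0 by apply/matrixP => a b; rewrite !mxE F2_addxx.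
by rewrite [S + (S + _)]addrA SS add0r addrCA addrA.
Qed.

Lemma sumsq n (y : nat -> 'cV[F2]_n) m :
  sum_sq_form (m.*2) (x_of_y y) = \sum_(k < m) circ (y k.*2) (y k.*2.+1).
Proof.
elim: m => [|m IH]; first by rewrite /sum_sq_form !big_ord0 mul0mx addr0.
rewrite /sum_sq_form in IH *.
rewrite sumx doubleS !big_ord_recr /= -IH sumx !xyE doubleK half_odd2.
set D := \sum_(i < m.*2) _.
set S := \sum_(i < m.*2) y i.
set u := y m.*2. set v := y m.*2.+1.
rewrite /circ.
apply/matrixP => k l; rewrite !mxE !big_ord1 !mxE.
set d := D k l.
have key : forall (s s' u u' v v' : F2),
  d + (s + u) * (s' + u') + (s + v) * (s' + v') + (s + u + v) * (s' + u' + v')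
  = d + s * s' + (u * v' + v * u').
  move=> s s' u1 u' v1 v'.
  transitivity (d + s * s' + (u1 * v' + v1 * u') + 2%:R * (s * s' + s * u' + u1 * s' + u1 * u' + s * v' + v1 * s' + v1 * v')).
    by ring.
  by rewrite F2_two mul0r addr0.
by rewrite key.
Qed.

Lemma mem_mkseqP (T : eqType) (f : nat -> T) r j : (j < r)%N -> f j \in mkseq f r.
Proof. by move=> jr; apply/mapP; exists j; rewrite ?mem_iota. Qed.

Lemma free_xy n (y : nat -> 'cV[F2]_n) m :
  free (mkseq y m.*2) -> free (mkseq (x_of_y y) m.*2).
Proof.
rewrite /free !size_mkseq => /eqP Hy.
apply/eqP/anti_leq; apply/andP; split.
  by rewrite -{2}(size_mkseq (x_of_y y) m.*2) dim_span.
rewrite -{1}Hy; apply: dimvS; apply/span_subvP => v /mapP [j].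
rewrite mem_iota add0n /= => jr ->.
have -> : y j = x_of_y y j - \sum_(i < (j./2).*2) x_of_y y i.
  by rewrite xyE sumx addrC addKr.
apply: memvB; first by apply: memv_span; apply: mem_mkseqP.
apply: memv_suml => i _; apply: memv_span; apply: mem_mkseqP.
apply: (leq_trans (ltn_ord i)); apply: leq_trans (ltnW jr).
by rewrite -{2}(odd_double_half j) leq_addl.
Qed.

Lemma free_rows n r (y : nat -> 'cV[F2]_n) :
  row_free (\matrix_(k < r) (y k)^T) -> free (mkseq y r).
Proof.
move=> Hf.
have Hs : size (mkseq y r) == r by rewrite size_mkseq.
have -> : mkseq y r = tval (Tuple Hs) by [].
apply/freeP => k Hk i.
have H0 : (\row_i k i) *m (\matrix_(k < r) (y k)^T) = 0 *m (\matrix_(k < r) (y k)^T).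
  have := congr1 trmx Hk; rewrite linear_sum /= trmx0 => Hk'.
  rewrite mul0mx -[RHS]Hk' mulmx_sum_row.
  apply: eq_bigr => l _; rewrite rowK mxE linearZ /= (nth_mkseq _ _ (ltn_ord l)).
  by [].
by have := row_free_inj Hf H0 => /rowP /(_ i); rewrite !mxE.
Qed.

Lemma rank_add_rV n p (M : 'M[F2]_(p, n)) (v : 'rV[F2]_n) t :
  (forall w : 'rV[F2]_n, (w <= M)%MS -> w 0 t = 0) -> v 0 t = 1 ->
  \rank (M + v)%MS = (\rank M).+1.
Proof.
move=> HM Hv.
have vn0 : v != 0.
  by apply/eqP => v0; move: Hv; rewrite v0 mxE => /eqP; rewrite eq_sym oner_eq0.
rewrite mxrank_disjoint_sum ?rank_rV ?vn0 ?addn1 //.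
apply/eqP; rewrite -submx0; apply/rV_subP => w; rewrite sub_capmx.
case/andP => wM /sub_rVP [c wc].
have := HM w wM; subst w; rewrite mxE Hv mulr1 => c0.
by rewrite c0 scale0r sub0mx.
Qed.

Lemma symp n (r : nat) : forall A : 'M[F2]_n, alternate_mx A -> \rank A = r ->
  exists m (y : nat -> 'cV[F2]_n), r = m.*2 /\
    (\matrix_(k < r) (y k)^T == A)%MS /\
    A = \sum_(k < m) circ (y k.*2) (y k.*2.+1).
Proof.
elim/ltn_ind: r => r IH A [Asym Adiag] rkA.
have [A0|An0] := eqVneq A 0.
  have r0 : r = 0%N by rewrite -rkA A0 mxrank0.
  rewrite r0; exists 0%N, (fun _ => 0); split => //; split.
    by rewrite A0; apply/andP; split; [apply/row_subP => -[] | exact: sub0mx].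
  by rewrite big_ord0.
have [i [j Aij]] : exists i j, A i j = 1.
  case: (pickP (fun p : 'I_n * 'I_n => A p.1 p.2 != 0)) => [[i j] /= /F2_neq0 Aij|H].
    by exists i, j.
  exfalso; move/eqP: An0; apply; apply/matrixP => i j.
  by move: (H (i, j)) => /= /negbFE /eqP ->; rewrite mxE.
have As k l : A k l = A l k by rewrite -{1}Asym mxE.
have Aji : A j i = 1 by rewrite As.
set a := row i A; set b := row j A.
set A' := A - a^T *m b - b^T *m a.
have aA : (a <= A)%MS by apply: row_sub.
have bA : (b <= A)%MS by apply: row_sub.
have A'E k l : A' k l = A k l - A i k * A j l - A j k * A i l.
  by rewrite /A' !mxE !big_ord1 !mxE.
have A'A : (A' <= A)%MS.
  rewrite /A' !addmx_sub ?submx_refl //.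
    by rewrite (eqmx_opp (a^T *m b)); apply: submx_trans (submxMl _ _) bA.
  by rewrite (eqmx_opp (b^T *m a)); apply: submx_trans (submxMl _ _) aA.
have AE : A = A' + (a^T *m b + b^T *m a).
  by rewrite /A' [a^T *m b + _]addrC addrA !subrK.
have ai : a 0 i = 0 by rewrite mxE Adiag.
have aj : a 0 j = 1 by rewrite mxE Aij.
have bi : b 0 i = 1 by rewrite mxE Aji.
clearbody A' a b.
have A's k l : A' k l = A' l k.
  by rewrite !A'E (As k l); ring.
have A'd k : A' k k = 0.
  by rewrite A'E Adiag sub0r [A j k * _]mulrC -opprD F2_addxx oppr0.
have A'alt : alternate_mx A'.
  by split => //; apply/matrixP => k l; rewrite mxE A's.
have A'i l : A' i l = 0.
  by rewrite A'E Adiag mul0r subr0 Aji mul1r subrr.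
have A'j l : A' j l = 0.
  by rewrite A'E Adiag mul0r subr0 Aij mul1r subrr.
have vanA' t : (forall l, A' t l = 0) -> forall w : 'rV_n, (w <= A')%MS -> w 0 t = 0.
  move=> Ht w /submxP [z ->]; rewrite mxE big1 // => k _.
  by rewrite A's Ht mulr0.
have eqA : (A == A' + a + b)%MS.
  apply/andP; split.
    rewrite {1}AE; apply: addmx_sub; first by rewrite -addsmxA addsmxSl.
    apply: addmx_sub.
      by apply: submx_trans (submxMl _ _) _; rewrite addsmxSr.
    by apply: submx_trans (submxMl _ _) _; rewrite -addsmxA (submx_trans _ (addsmxSr _ _)) // addsmxSl.
  by rewrite !addsmx_sub A'A aA bA.
have rkA' : r = (\rank A').+2.
  rewrite -rkA (eqmx_rank eqA) (@rank_add_rV _ _ _ _ i).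
  - by rewrite (@rank_add_rV _ _ _ _ j) // ?mxE //; apply: vanA'.
  - move=> w /sub_addsmxP [[u1 u2] /= ->].
    rewrite mxE (vanA' i A'i) ?submxMl // add0r mxE big_ord1.
    by rewrite ai mulr0.
  - by [].
have ltr : (\rank A' < r)%N by rewrite rkA'.
have [m' [y' [rm' [eqM' AE']]]] := IH (\rank A') ltr A' A'alt erefl.
move: eqM'; rewrite rm' => eqM'.
pose y k := match k with 0%N => a^T | 1%N => b^T | k'.+2 => y' k' end.
exists m'.+1, y; split; first by rewrite rkA' rm' doubleS.
split; last first.
  rewrite big_ord_recl /=.
  under eq_bigr => k _ do rewrite add0n.
  by rewrite -AE' {1}AE addrC /circ !trmxK.
rewrite rkA' rm'.
set N := m'.*2.
set M := \matrix_(k < N.+2) (y k)^T.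
set M' := \matrix_(k < N) (y' k)^T.
have M'M : (M' <= M)%MS.
  apply/row_subP => k; rewrite rowK.
  have -> : (y' k)^T = row (Ordinal (ltn_ord k : (k.+2 < N.+2)%N)) M by rewrite rowK.
  exact: row_sub.
move/andP: eqM' => [M'A' A'M'].
apply/andP; split.
  apply/row_subP => k; rewrite rowK; case: k => [[|[|k]] Hk] /=.
  - by rewrite trmxK.
  - by rewrite trmxK.
  - have -> : (y' k)^T = row (Ordinal (Hk : (k < N)%N)) M' by rewrite rowK.
    by apply: submx_trans (row_sub _ _) (submx_trans M'A' A'A).
move/andP: eqA => [AS _].
apply: submx_trans AS _.
rewrite !addsmx_sub (submx_trans A'M' M'M) /=.
have -> : a = row (0 : 'I_N.+2) M by rewrite rowK /= trmxK.
have -> : b = row (1 : 'I_N.+2) M by rewrite rowK /= trmxK.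
by rewrite !row_sub.
Qed.

Theorem lemma3p7 (n r : nat) (A : 'M[F2]_n) :
  alternate_mx A -> \rank A = r -> (0 < r)%N ->
  (exists x : nat -> 'cV[F2]_n, lin_indep r x /\ A = sum_sq_form r x) /\
  (forall (m : nat) (y : nat -> 'cV[F2]_n),
     r = m.*2 -> lin_indep r y ->
     A = \sum_(k < m) circ (y k.*2) (y k.*2.+1) ->
     lin_indep r (x_of_y y) /\ A = sum_sq_form r (x_of_y y)).
Proof.
move=> HA rkA r0.
have part2 : forall (m : nat) (y : nat -> 'cV[F2]_n),
     r = m.*2 -> lin_indep r y ->
     A = \sum_(k < m) circ (y k.*2) (y k.*2.+1) ->
     lin_indep r (x_of_y y) /\ A = sum_sq_form r (x_of_y y).
  move=> m y -> Hy ->; split; first exact: free_xy.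
  by rewrite sumsq.
split => //.
have [m [y [rm [Heq AE]]]] := @symp n r A HA rkA.
exists (x_of_y y); apply: (part2 m y rm _ AE).
apply: free_rows; rewrite /row_free (eqmx_rank Heq) rkA.
by [].
Qed.
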